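(* Let $(N,v)$ be a balanced game. If the core $C(N,v)$ is a stable set, then the collection $\mathscr{VE}(N,v)$ of strictly vital-exact coalitions is core-describing, i.e., $$C(N,v)=\{x\in X(N,v)\mid x(S)\ge v(S)\ \forall S\in\mathscr{VE}(N,v)\}.$$
   Context: A game $(N,v)$: $N$ finite nonempty, $v:2^N\to\mathbb{R}$, $v(\varnothing)=0$; $x(S)=\sum_{i\in S}x_i$. Preimputations $X(N,v)=\{x\in\mathbb{R}^N\mid x(N)=v(N)\}$; imputations $I(N,v)=\{x\in X(N,v)\mid x_i\ge v(\{i\})\ \forall i\in N\}$. Core: $C(N,v)=\{x\in X(N,v)\mid x(S)\ge v(S)\ \forall S\subseteq N\}$; balanced means nonempty core. For preimputations $x,y$ and a coalition $S$, $x$ dominates $y$ via $S$ if $x(S)\le v(S)$ and $x_i>y_i$ for all $i\in S$; $x$ dominates $y$ if this holds for some coalition $S$. A set $U\subseteq I(N,v)$ is a stable set if (i) no element of $U$ is dominated by an element of $U$, and (ii) every $y\in I(N,v)\setminus U$ is dominated by some $x\in U$. A coalition $S$ is strictly vital-exact if there exists $x\in C(N,v)$ with $x(S)=v(S)$ and $x(T)>v(T)$ for all $T\in 2^S\setminus\{\varnothing,S\}$. *)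

(* Defs.v *)
From HB Require Import structures.
From mathcomp Require Import all_boot all_order all_algebra.
From mathcomp Require Import reals.
Set Implicit Arguments. Unset Strict Implicit. Unset Printing Implicit Defensive.
Import Order.TTheory GRing.Theory Num.Theory.
Local Open Scope ring_scope.

Section Games.
Variables (R : realType) (N : finType).

Definition is_game (v : {set N} -> R) : Prop := v set0 = 0.

Definition xsum (x : N -> R) (S : {set N}) : R := \sum_(i in S) x i.

Definition preimputation (v : {set N} -> R) (x : N -> R) : Prop :=
  xsum x [set: N] = v [set: N].

Definition imputation (v : {set N} -> R) (x : N -> R) : Prop :=
  preimputation v x /\ forall i : N, v [set i] <= x i.

Definition core (v : {set N} -> R) (x : N -> R) : Prop :=
  preimputation v x /\ forall S : {set N}, v S <= xsum x S.

Definition balanced (v : {set N} -> R) : Prop := exists x, core v x.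

Definition dominates_via (v : {set N} -> R) (x y : N -> R) (S : {set N}) : Prop :=
  S != set0 /\ xsum x S <= v S /\ forall i, i \in S -> y i < x i.

Definition dominates (v : {set N} -> R) (x y : N -> R) : Prop :=
  exists S : {set N}, dominates_via v x y S.

Definition stable_set (v : {set N} -> R) (U : (N -> R) -> Prop) : Prop :=
  (forall x, U x -> imputation v x) /\
  (forall x y, U x -> U y -> ~ dominates v x y) /\
  (forall y, imputation v y -> ~ U y -> exists2 x, U x & dominates v x y).

Definition strictly_vital_exact (v : {set N} -> R) (S : {set N}) : Prop :=
  exists x, [/\ core v x, xsum x S = v S &
    forall T : {set N}, T \subset S -> T != set0 -> T != S -> v T < xsum x T].

End Games.

(* Main.v *)
Require Import Defs.
From HB Require Import structures.
From mathcomp Require Import all_boot all_order all_algebra.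
From mathcomp Require Import reals.
From Stdlib Require Import Classical.
From mathcomp Require Import ring lra.
Import Order.TTheory GRing.Theory Num.Theory.
Local Open Scope ring_scope.

Section Aux.
Variables (R : realType) (N : finType) (v : {set N} -> R).

Lemma xsum1 (x : N -> R) j : xsum x [set j] = x j.
Proof. by rewrite /xsum big_set1. Qed.

Lemma xsum_lin (x z : N -> R) t S :
  xsum (fun k => z k + t * (x k - z k)) S = xsum z S + t * (xsum x S - xsum z S).
Proof.
rewrite /xsum big_split /= -mulr_sumr sumrB //.
Qed.

Lemma dom_sve (c y : N -> R) : core v c ->
  forall n (S : {set N}), (#|S| <= n)%N -> dominates_via v c y S ->
  exists S', strictly_vital_exact v S' /\ xsum y S' < v S'.
Proof.
move=> [cp cS]; elim=> [|n IH] S hS [S0 [hle hlt]].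
  by move: S0; rewrite -card_gt0; case: #|S| hS.
case: (boolP [exists T : {set N}, [&& T \subset S, T != set0, T != S &
            ~~ (v T < xsum c T)]]).
  move=> /existsP [T /and4P [TS T0 TnS hT]].
  apply: (IH T).
    have: T \proper S by rewrite properEneq TnS.
    by move/proper_card => h; rewrite -ltnS; apply: leq_trans h hS.
  split=> //; split; first by rewrite leNgt.
  by move=> i iT; apply: hlt; apply: (subsetP TS).
rewrite negb_exists => /forallP hall.
exists S; split.
  exists c; split; [by split | by apply/le_anti; rewrite hle cS | ].
  move=> T TS T0 TnS; move: (hall T); rewrite TS T0 TnS /=.
  by rewrite negbK.
apply: (lt_le_trans _ hle).
rewrite /xsum; apply: ltr_sum => //.
by case/set0Pn: S0 => i iS; apply/hasP; exists i => //; rewrite mem_index_enum.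
Qed.

End Aux.

Theorem proposition7p2 (R : realType) (N : finType) (v : {set N} -> R) :
  (0 < #|N|)%N ->
  is_game v ->
  balanced v ->
  stable_set v (core v) ->
  forall x : N -> R,
    core v x <->
    (preimputation v x /\
     forall S : {set N}, strictly_vital_exact v S -> v S <= xsum x S).
Proof.
move=> _ _ [z zc] [_ [_ st]] x; split.
  by move=> [xp xS]; split => // S _; apply: xS.
move=> [xp xSVE].
have key : forall y, imputation v y ->
    (forall S, strictly_vital_exact v S -> v S <= xsum y S) -> core v y.
  move=> y yi yS; apply: NNPP => ync.
  have [c cc [S dS]] := st y yi ync.
  have [S' [sve lt]] := @dom_sve _ _ v _ _ cc _ _ (leqnn #|S|) dS.
  by move: (yS S' sve); rewrite leNgt lt.
apply: (key) => //; split => // i.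
apply: NNPP => /negP; rewrite -ltNge => xi.
set B := [pred k | x k < v [set k]].
have Bi : B i by [].
set f := fun k => (z k - v [set k]) / (z k - x k).
case: (arg_minP f Bi) => j Bj jmin.
have [zp zS] := zc.
have zk k : v [set k] <= z k by rewrite -(@xsum1 _ _ z); apply: zS.
have dj : 0 < z j - x j.
  by rewrite subr_gt0; apply: lt_le_trans (zk j); exact: Bj.
set t := f j.
have t0 : 0 <= t by apply: divr_ge0; [rewrite subr_ge0 zk | exact: ltW dj].
have t1 : t <= 1.
  rewrite /t /f ler_pdivrMr // mul1r lerD2l lerN2; apply: ltW; exact: Bj.
set w := fun k => z k + t * (x k - z k).
have hw S : v S <= xsum z S -> v S <= xsum x S -> v S <= xsum w S.
  move=> h1 h2; rewrite /w xsum_lin.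
  have : 0 <= t * (xsum x S - v S) by rewrite mulr_ge0 // subr_ge0.
  have : 0 <= (1 - t) * (xsum z S - v S) by rewrite mulr_ge0 // subr_ge0.
  move=> a b; lra.
have wc : core v w.
  apply: key.
    split.
      by rewrite /preimputation /w xsum_lin zp xp subrr mulr0 addr0.
    move=> k; rewrite /w.
    case: (boolP (B k)) => Bk.
      have dk : 0 < z k - x k.
        by rewrite subr_gt0; apply: lt_le_trans (zk k); exact: Bk.
      have := jmin k Bk; rewrite -/t /f ler_pdivlMr // => h.
      have : t * (z k - x k) <= z k - v [set k] by [].
      move=> h'; lra.
    move: Bk; rewrite /B inE /= -leNgt => xk.
    have := hw [set k]; rewrite !xsum1 /w; apply; [exact: zk | exact: xk].
  by move=> S sve; apply: hw; [apply: zS | apply: xSVE].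
have : strictly_vital_exact v [set j].
  exists w; split => //.
    rewrite xsum1 /w /t /f -[x j - z j]opprB mulrN divfK; last exact: lt0r_neq0.
    by rewrite opprB addrC subrK.
  move=> T; rewrite subset1 => /orP [/eqP -> _ /eqP //|/eqP -> /eqP //].
move/xSVE; rewrite xsum1 => h.
by move: (Bj); rewrite /B inE /= ltNge h.
Qed.
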